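(* Let $X\subseteq\Omega$ and $D\in\mathcal{I}^{\mathbf{c}}(X)$, and let $Y=\min(D)\cup(X-D)$. Then $\min(D)\subseteq\max(Y)$, and $$\pi(X,D)=\pi(Y,\min(D))=\sum_{I\in\mathcal{I}(Y)}(-1)^{|I\cap\min(D)|}\Big(\prod_{i\in I-\max(I)}\tau_{(i)}\Big)\Big(\prod_{i\in\max(I)-\min(D)}\eta_{(i)}\Big)x^{|I|}.$$
   Context: $\Omega$ is a finite set and $\mathbf{P}=(\Omega,\preccurlyeq_{\mathbf{P}})$ a poset. For $Y\subseteq\Omega$: $\max(Y)$, $\min(Y)$ are the maximal, minimal elements of $Y$ w.r.t. $\preccurlyeq_{\mathbf{P}}$; $\mathcal{I}(Y)$ is the set of ideals (down-closed subsets) of the subposet $Y$ with the induced order; $\mathcal{I}^{\mathbf{c}}(Y)$ is the set of ideals of the dual of that subposet (i.e., up-closed subsets of $Y$). $K$ is a commutative ring and $\tau,\eta\in K^{\Omega}$ are fixed. For $D,I\subseteq\Omega$, $\varphi(D,I)=(-1)^{|I\cap D|}\big(\prod_{i\in I-\max(I)}\tau_{(i)}\big)\big(\prod_{i\in\max(I)-D}\eta_{(i)}\big)$ if $I\cap D\subseteq\max(I)$, and $\varphi(D,I)=0$ otherwise. For $Y\subseteq\Omega$ and $D\subseteq Y$, $\pi(Y,D)=\sum_{I\in\mathcal{I}(Y)}\varphi(D,I)x^{|I|}\in K[x]$. *)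

(* Defs.v *)
From mathcomp Require Import all_boot all_order all_algebra.
Set Implicit Arguments. Unset Strict Implicit. Unset Printing Implicit Defensive.
Import GRing.Theory.
Local Open Scope ring_scope.

(* The poset P = (Omega, le) is given by a relation le on a finite type Omega
   (the order axioms are hypotheses of the theorem). *)
Section Poset.
Variables (Omega : finType) (le : rel Omega).

Definition maxs (Y : {set Omega}) : {set Omega} :=
  [set y in Y | [forall z in Y, le y z ==> (z == y)]].
Definition mins (Y : {set Omega}) : {set Omega} :=
  [set y in Y | [forall z in Y, le z y ==> (z == y)]].

Definition is_ideal (Y I : {set Omega}) : bool :=
  (I \subset Y) && [forall i in I, forall j in Y, le j i ==> (j \in I)].
(* D is an ideal of the dual of Y, i.e. an up-closed subset of Y *)
Definition is_coideal (Y D : {set Omega}) : bool :=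
  (D \subset Y) && [forall i in D, forall j in Y, le i j ==> (j \in D)].

Variables (K : comNzRingType) (tau eta : Omega -> K).

Definition varphi (D I : {set Omega}) : K :=
  if I :&: D \subset maxs I then
    (-1) ^+ #|I :&: D| * (\prod_(i in I :\: maxs I) tau i)
      * (\prod_(i in maxs I :\: D) eta i)
  else 0.

Definition piY (Y D : {set Omega}) : {poly K} :=
  \sum_(I : {set Omega} | is_ideal Y I) varphi D I *: 'X^#|I|.

End Poset.

(* Main.v *)
Require Import Defs.
From mathcomp Require Import all_boot all_order all_algebra.
Import GRing.Theory.
Local Open Scope ring_scope.

Section Aux.
Variables (Omega : finType) (le : rel Omega).

Lemma is_idealP (Y I : {set Omega}) :
  reflect (I \subset Y /\ forall i j, i \in I -> j \in Y -> le j i -> j \in I)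
          (is_ideal le Y I).
Proof.
apply: (iffP andP) => [[sIY /forallP H]|[sIY H]]; split => //.
  by move=> i j iI jY lji; move: (H i); rewrite iI /= => /forallP/(_ j); rewrite jY lji.
by apply/forallP => i; apply/implyP => iI; apply/forallP => j; apply/implyP => jY;
   apply/implyP; apply: H.
Qed.

Lemma is_coidealP (Y I : {set Omega}) :
  reflect (I \subset Y /\ forall i j, i \in I -> j \in Y -> le i j -> j \in I)
          (is_coideal le Y I).
Proof.
apply: (iffP andP) => [[sIY /forallP H]|[sIY H]]; split => //.
  by move=> i j iI jY lji; move: (H i); rewrite iI /= => /forallP/(_ j); rewrite jY lji.
by apply/forallP => i; apply/implyP => iI; apply/forallP => j; apply/implyP => jY;
   apply/implyP; apply: H.
Qed.

Lemma minsP (D : {set Omega}) x :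
  reflect (x \in D /\ forall z, z \in D -> le z x -> z = x) (x \in mins le D).
Proof.
rewrite inE; apply: (iffP andP) => [[xD /forallP H]|[xD H]]; split => //.
  by move=> z zD lzx; apply/eqP; move: (H z); rewrite zD lzx.
by apply/forallP => z; apply/implyP => zD; apply/implyP => lzx; apply/eqP; apply: H.
Qed.

Lemma maxsP (D : {set Omega}) x :
  reflect (x \in D /\ forall z, z \in D -> le x z -> z = x) (x \in maxs le D).
Proof.
rewrite inE; apply: (iffP andP) => [[xD /forallP H]|[xD H]]; split => //.
  by move=> z zD lzx; apply/eqP; move: (H z); rewrite zD lzx.
by apply/forallP => z; apply/implyP => zD; apply/implyP => lzx; apply/eqP; apply: H.
Qed.

End Aux.
Arguments is_idealP {Omega le Y I}.
Arguments is_coidealP {Omega le Y I}.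
Arguments minsP {Omega le D x}.
Arguments maxsP {Omega le D x}.


Theorem theorem3p1 (Omega : finType) (le : rel Omega)
  (le_refl : reflexive le) (le_anti : antisymmetric le)
  (le_trans : transitive le)
  (K : comNzRingType) (tau eta : Omega -> K)
  (X D : {set Omega}) (hD : is_coideal le X D) :
  let Y := mins le D :|: (X :\: D) in
  [/\ mins le D \subset maxs le Y,
      piY le tau eta X D = piY le tau eta Y (mins le D)
    & piY le tau eta Y (mins le D) =
      \sum_(I : {set Omega} | is_ideal le Y I)
        ((-1) ^+ #|I :&: mins le D| * (\prod_(i in I :\: maxs le I) tau i)
          * (\prod_(i in maxs le I :\: mins le D) eta i)) *: 'X^#|I|].
Proof.
move=> Y.
have [sDX Dup] := elimT is_coidealP hD.
have sminD : mins le D \subset D by apply/subsetP => x /minsP[].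
have sYX : Y \subset X.
  apply/subsetP => x; rewrite in_setU in_setD => /orP[/minsP[xD _]|/andP[_ //]].
  exact: (subsetP sDX).
have YD : forall y, y \in Y -> y \in D -> y \in mins le D.
  by move=> y; rewrite in_setU in_setD => /orP[->//|/andP[/negP//]].
have part1 : mins le D \subset maxs le Y.
  apply/subsetP => m mm; have [mD mmin] := elimT minsP mm.
  apply/maxsP; split; first by rewrite inE mm.
  move=> z zY lmz.
  have zD : z \in D by apply: (Dup m z mD (subsetP sYX z zY) lmz).
  have [_ zmin] := elimT minsP (YD z zY zD).
  by rewrite (zmin m mD lmz).
have condY : forall I, is_ideal le Y I -> I :&: mins le D \subset maxs le I.
  move=> I /is_idealP[sIY _]; apply/subsetP => x; rewrite in_setI => /andP[xI xm].
  have [_ H] := elimT maxsP (subsetP part1 x xm).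
  by apply/maxsP; split => // z zI; apply: H; apply: (subsetP sIY).
have eqID : forall I, is_ideal le Y I -> I :&: D = I :&: mins le D.
  move=> I /is_idealP[sIY _]; apply/setP => x; rewrite !in_setI.
  case xI: (x \in I) => //=; apply/idP/idP; last by apply: (subsetP sminD).
  by apply: YD; apply: (subsetP sIY).
have eqMD : forall I, is_ideal le Y I -> maxs le I :\: D = maxs le I :\: mins le D.
  move=> I hI; apply/setP => x; rewrite !in_setD.
  case xM: (x \in maxs le I); last by rewrite !andbF.
  have xI : x \in I by case/maxsP: xM.
  have := congr1 (fun S : {set Omega} => x \in S) (eqID I hI).
  by rewrite /= !in_setI xI /= => ->.
have YX : forall I, is_ideal le Y I -> is_ideal le X I.
  move=> I /is_idealP[sIY H]; apply/is_idealP; split; first exact: subset_trans sYX.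
  move=> i j iI jX lji.
  case jD: (j \in D).
    have iD : i \in D by apply: (Dup j i jD (subsetP (subset_trans sIY sYX) i iI) lji).
    have [_ imin] := elimT minsP (YD i (subsetP sIY i iI) iD).
    by rewrite (imin j jD lji).
  by apply: (H i j iI) => //; rewrite in_setU in_setD jD jX orbT.
have XY : forall I, is_ideal le X I -> I :&: D \subset maxs le I -> is_ideal le Y I.
  move=> I /is_idealP[sIX H] cI; apply/is_idealP; split; last first.
    by move=> i j iI jY; apply: H => //; apply: (subsetP sYX).
  apply/subsetP => i iI; rewrite in_setU in_setD.
  case iD: (i \in D); last by rewrite (subsetP sIX i iI) orbT.
  apply/orP; left; apply/minsP; split => // z zD lzi.
  have zI : z \in I by apply: (H i z iI (subsetP sDX z zD) lzi).
  have zID : z \in I :&: D by rewrite in_setI zI zD.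
  have [_ imax] := elimT maxsP (subsetP cI z zID).
  by rewrite (imax i iI lzi).
split => //.
  rewrite /piY (big_mkcond (fun I => is_ideal le X I)) (big_mkcond (fun I => is_ideal le Y I)).
  apply: eq_bigr => I _.
  case hY: (is_ideal le Y I).
    rewrite (YX I hY) /varphi (eqID I hY) (eqMD I hY).
    by [].
  case hX: (is_ideal le X I) => //.
  rewrite /varphi; case: ifP => [c|]; last by rewrite scale0r.
  by rewrite (XY I hX c) in hY.
rewrite /piY; apply: eq_bigr => I hI.
by rewrite /varphi (condY I hI).
Qed.
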